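(* Let $S$ be an additively reduced semidomain and $G$ a torsion-free abelian group. Let $f=\sum_{i=0}^n s_ix^{g_i}\in S[G]$ (with $g_0>g_1>\dots>g_n$ and $s_i\in S\setminus\{0\}$) satisfy $|\operatorname{supp}(f)|>1$. Then $f$ is irreducible if and only if $f$ is monolithic and $1\in\gcd(\{s_0,s_1,\dots,s_n\})$.
   Context: A semidomain is a subsemiring (containing $0$ and $1$) of an integral domain; all semirings are commutative. $S$ is additively reduced if $0$ is the only invertible element of $(S,+)$; $S^\times$ is the unit group of the multiplicative monoid $S\setminus\{0\}$. $G$ carries a fixed total order compatible with addition. $S[G]$ is the semidomain of formal finite sums $\sum_{g\in G}s_gx^g$ with polynomial operations; $\operatorname{supp}(f)$ is the set of exponents with nonzero coefficient. $f$ is irreducible if it is nonzero, a nonunit of $S[G]$, and $f=pq$ implies $p$ or $q$ is a unit. A nonzero $f\in S[G]$ is monolithic if whenever $f=pq$ with $p,q\in S[G]$, one of $p,q$ is a monomial $sx^g$. For $B\subseteq S\setminus\{0\}$, $\gcd(B)$ is the set of greatest common divisors of $B$ in the multiplicative monoid $S\setminus\{0\}$; thus $1\in\gcd(B)$ means every common divisor of all elements of $B$ is a unit of $S$. *)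

(* Defs.v *)
From HB Require Import structures.
From mathcomp Require Import all_boot all_order all_algebra.
From mathcomp Require Import finmap.
Set Implicit Arguments. Unset Strict Implicit. Unset Printing Implicit Defensive.
Import Order.TTheory GRing.Theory Num.Theory.
Local Open Scope ring_scope.

(* The group algebra R[G] over the integral domain R containing the semidomain
   S is modelled by finitely supported functions G -> R ({fsfun G -> R with 0});
   S[G] is the subset of those with all coefficients in S. *)
Notation gpoly G R := {fsfun G -> R with 0%R}.

Section GroupAlgebra.
Variables (R : idomainType) (G : zmodType) (S : {pred R}).

Definition inSG (f : gpoly G R) : Prop := forall g, f g \in S.

Definition gmul (p q : gpoly G R) : G -> R :=
  fun g => (\sum_(x <- finsupp p) p x * q (g - x))%R.

Definition gone : G -> R := fun g => if g == 0 then 1 else 0.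

Definition gprod_eq (f p q : gpoly G R) : Prop := forall g, f g = gmul p q g.

Definition unitSG (p : gpoly G R) : Prop :=
  inSG p /\ exists q : gpoly G R, inSG q /\ forall g, gmul p q g = gone g.

Definition nonzeroG (f : gpoly G R) : Prop := exists g, f g != 0.

Definition irreducibleSG (f : gpoly G R) : Prop :=
  nonzeroG f /\ ~ unitSG f /\
  forall p q, inSG p -> inSG q -> gprod_eq f p q -> unitSG p \/ unitSG q.

Definition monomialSG (p : gpoly G R) : Prop :=
  exists (s : R) (g : G), s \in S /\ forall h, p h = if h == g then s else 0.

Definition monolithic (f : gpoly G R) : Prop :=
  nonzeroG f /\
  forall p q, inSG p -> inSG q -> gprod_eq f p q -> monomialSG p \/ monomialSG q.

End GroupAlgebra.

Definition sdvd (R : idomainType) (S : {pred R}) (d b : R) : Prop :=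
  exists c, [/\ c \in S, c != 0 & b = d * c].

Definition is_gcdS (R : idomainType) (S : {pred R}) (B : R -> Prop) (d : R) : Prop :=
  [/\ d \in S, d != 0,
      (forall b, B b -> sdvd S d b) &
      (forall e, e \in S -> e != 0 -> (forall b, B b -> sdvd S e b) -> sdvd S e d)].

Definition coeffs_set (R : idomainType) (G : zmodType) (f : gpoly G R) : R -> Prop :=
  fun s => exists2 g, g \in finsupp f & s = f g.

(* Main.v *)
Require Import Defs.
From HB Require Import structures.
From mathcomp Require Import all_boot all_order all_algebra.
From mathcomp Require Import finmap.
Import Order.TTheory GRing.Theory Num.Theory.
Local Open Scope ring_scope.
Set Implicit Arguments. Unset Strict Implicit.

Section Aux.
Variables (R : idomainType) (G : zmodType).

Definition mkfs (A : {fset G}) (F : G -> R) : gpoly G R := [fsfun x in A => F x | 0].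
Lemma mkfsE A F x : mkfs A F x = if x \in A then F x else 0.
Proof. by rewrite /mkfs fsfun_fun. Qed.

Definition mono (s : R) (g : G) := mkfs [fset g]%fset (fun _ => s).
Lemma monoE s g h : mono s g h = if h == g then s else 0.
Proof. by rewrite /mono mkfsE in_fset1. Qed.

Lemma notsupp (p : gpoly G R) x : x \notin finsupp p -> p x = 0.
Proof. by rewrite mem_finsupp negbK => /eqP. Qed.

Lemma insupp (p : gpoly G R) x : x \in finsupp p -> p x != 0.
Proof. by rewrite mem_finsupp. Qed.

Lemma gmul_monoL (p q : gpoly G R) (s : R) (a : G) :
  (forall h, p h = if h == a then s else 0) ->
  forall g, gmul p q g = s * q (g - a).
Proof.
move=> hp g; rewrite /gmul.
have [aP|aN] := boolP (a \in finsupp p).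
  rewrite (bigD1_seq a) //= ?fset_uniq // big1_seq ?addr0; first by rewrite hp eqxx.
  by move=> x /andP[/negbTE xa _]; rewrite hp xa mul0r.
have pa := notsupp aN; rewrite hp eqxx in pa; rewrite pa mul0r big1_seq // => x _.
by rewrite hp; case: ifP => _; rewrite ?pa mul0r.
Qed.

Lemma subeqE (g x b : G) : (g - x == b) = (x == g - b).
Proof.
apply/eqP/eqP => [<-|->].
  by rewrite opprB addrC subrK.
by rewrite opprB addrC subrK.
Qed.

Lemma gmul_monoR (p q : gpoly G R) (t : R) (b : G) :
  (forall h, q h = if h == b then t else 0) ->
  forall g, gmul p q g = p (g - b) * t.
Proof.
move=> hq g; rewrite /gmul.
have [cP|cN] := boolP (g - b \in finsupp p).
  rewrite (bigD1_seq (g - b)) //= ?fset_uniq // big1_seq ?addr0.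
    by rewrite hq subeqE eqxx.
  by move=> x /andP[/negbTE xa _]; rewrite hq subeqE xa mulr0.
rewrite notsupp // mul0r big1_seq // => x /= xP.
rewrite hq subeqE; case: eqP => [e|_]; last by rewrite mulr0.
by rewrite -e xP in cN.
Qed.

Lemma sum_neq0 (T : eqType) (r : seq T) (F : T -> R) :
  \sum_(x <- r) F x != 0 -> exists2 x, x \in r & F x != 0.
Proof.
move=> H; have [/hasP[x xr Fx]|/hasPn Hn] := boolP (has (fun x => F x != 0) r).
  by exists x.
suff E : \sum_(x <- r) F x = 0 by rewrite E eqxx in H.
rewrite big1_seq // => x /= xr.
by move: (Hn x xr); rewrite negbK => /eqP.
Qed.

Lemma mono_supp (p : gpoly G R) s g :
  (forall h, p h = if h == g then s else 0) -> forall x, x \in finsupp p -> x = g.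
Proof.
move=> hp x /insupp; rewrite hp; case: (x =P g) => // _; by rewrite eqxx.
Qed.

Lemma supp_single (p : gpoly G R) b :
  (forall x, x \in finsupp p -> x = b) -> (#|` finsupp p| <= 1)%N.
Proof.
move=> H; rewrite -(cardfs1 b); apply: fsubset_leq_card; apply/fsubsetP => x xP.
by rewrite in_fset1 (H x xP).
Qed.

Section Ord.
Variables (le : rel G)
  (le_refl : reflexive le) (le_anti : antisymmetric le) (le_trans : transitive le)
  (le_total : total le)
  (le_add : forall a b c, le a b -> le (a + c) (b + c)).

Lemma seq_max (s : seq G) x0 : x0 \in s ->
  exists2 a, a \in s & forall y, y \in s -> le y a.
Proof.
elim: s x0 => // x s IH x0 _; case: s IH => [|y s] IH.
  by exists x; rewrite ?mem_head // => z; rewrite mem_seq1 => /eqP ->.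
have [a aIn aM] := IH y (mem_head _ _).
have [hxa|hxa] := boolP (le x a).
  exists a; first by rewrite in_cons aIn orbT.
  by move=> z; rewrite in_cons => /orP[/eqP->|/aM].
have hax : le a x by move: (le_total x a); rewrite (negbTE hxa).
exists x; first exact: mem_head.
move=> z; rewrite in_cons => /orP[/eqP->|/aM h]; first exact: le_refl.
exact: le_trans hax.
Qed.

Lemma lead (p q : gpoly G R) x0 y0 : x0 \in finsupp p -> y0 \in finsupp q ->
  exists a b, [/\ a \in finsupp p, b \in finsupp q,
    (forall x, x \in finsupp p -> le x a), (forall y, y \in finsupp q -> le y b)
    & gmul p q (a + b) != 0].
Proof.
move=> x0P y0P.
have [a aP aM] := seq_max x0P.
have [b bP bM] := seq_max y0P.
exists a, b; split => //.
rewrite /gmul (bigD1_seq a) //= ?fset_uniq // big1_seq ?addr0.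
  by rewrite addrC addKr mulf_neq0 // insupp.
move=> x /andP[xa xP]; apply/eqP; rewrite mulf_eq0; apply/orP; right.
apply/eqP/notsupp; apply/negP => /bM h.
have := le_add (x - b) h; rewrite addrA subrK addrK [b + _]addrC subrK => hax.
have e : x = a by apply: le_anti; rewrite (aM x xP) hax.
by move: xa; rewrite e eqxx.
Qed.
End Ord.

Lemma unit_mono (S : {pred R}) (le : rel G)
  (le_refl : reflexive le) (le_anti : antisymmetric le) (le_trans : transitive le)
  (le_total : total le)
  (le_add : forall a b c, le a b -> le (a + c) (b + c)) (p : gpoly G R) :
  unitSG S p -> monomialSG S p.
Proof.
case=> pS [q [qS hpq]].
have h0 := hpq 0; rewrite /gone eqxx /gmul in h0.
have hne : \sum_(x <- finsupp p) p x * q (0 - x) != 0 by rewrite h0 oner_neq0.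
have [x xP] := sum_neq0 hne.
rewrite mulf_eq0 negb_or => /andP[_ qx].
have qxP : (0 - x) \in finsupp q by rewrite mem_finsupp.
have [a1 [b1 [a1P b1P a1M b1M hab1]]] := lead le_refl le_anti le_trans le_total le_add xP qxP.
move: hab1; rewrite hpq /gone; case: (a1 + b1 =P 0) => [hab1 _|_]; last by rewrite eqxx.
have r_refl : reflexive (fun x y => le y x) by move=> z; exact: le_refl.
have r_anti : antisymmetric (fun x y => le y x).
  by move=> u v /andP[h1 h2]; apply: le_anti; rewrite h1 h2.
have r_trans : transitive (fun x y => le y x).
  by move=> u v w h1 h2; exact: le_trans h2 h1.
have r_total : total (fun x y => le y x) by move=> u v; exact: le_total.
have r_add : forall a b c, le b a -> le (b + c) (a + c) by move=> u v w; exact: le_add.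
have [a2 [b2 [a2P b2P a2M b2M hab2]]] := lead r_refl r_anti r_trans r_total r_add xP qxP.
move: hab2; rewrite hpq /gone; case: (a2 + b2 =P 0) => [hab2 _|_]; last by rewrite eqxx.
have l12 : le a1 a2.
  have := le_add _ _ (a1 + a2) (b2M b1 b1P).
  by rewrite addrCA [b2 + a2]addrC hab2 addr0 addrA [b1 + a1]addrC hab1 add0r.
have e12 : a1 = a2 by apply: le_anti; rewrite l12 (a2M a1 a1P).
exists (p a1), a1; split => // h.
case: (h =P a1) => [->//|hna].
have [hP|hN] := boolP (h \in finsupp p); last exact: notsupp.
have : h = a1 by apply: le_anti; rewrite (a1M h hP) e12 (a2M h hP).
by move/hna.
Qed.
End Aux.

Theorem lemma3p1
  (R : idomainType) (S : {pred R})
  (* S is a semidomain: a subsemiring of the integral domain R *)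
  (hS0 : 0 \in S) (hS1 : 1 \in S)
  (SD : forall x y, x \in S -> y \in S -> x + y \in S)
  (SM : forall x y, x \in S -> y \in S -> x * y \in S)
  (* S is additively reduced *)
  (Sred : forall x, x \in S -> (exists2 y, y \in S & x + y = 0) -> x = 0)
  (G : zmodType)
  (* G is torsion-free *)
  (Gtf : forall (g : G) (n : nat), (0 < n)%N -> g *+ n = 0 -> g = 0)
  (* the fixed total order on G compatible with addition *)
  (le : rel G)
  (le_refl : reflexive le) (le_anti : antisymmetric le) (le_trans : transitive le)
  (le_total : total le)
  (le_add : forall a b c, le a b -> le (a + c) (b + c))
  (f : gpoly G R) (fS : inSG S f)
  (hsupp : (1 < #|` finsupp f|)%N) :
  irreducibleSG S f <-> (monolithic S f /\ is_gcdS S (coeffs_set f) 1).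
Proof.
have UM := unit_mono le_refl le_anti le_trans le_total le_add.
have notmono : forall b, ~ (forall x, x \in finsupp f -> x = b).
  by move=> b /supp_single; rewrite leqNgt hsupp.
have nzf : nonzeroG f.
  have : finsupp f != fset0 by rewrite -cardfs_eq0 -lt0n (ltn_trans _ hsupp).
  by case/fset0Pn => x /insupp fx; exists x.
split.
  move=> [_ [nunit irr]]; split.
    split => // p q pS qS hf.
    by case: (irr p q pS qS hf) => u; [left|right]; apply: UM.
  split => //; first exact: oner_neq0.
    move=> b [g gf ->]; exists (f g); split => //; [exact: insupp | by rewrite mul1r].
  move=> e eS e0 he.
  have Hall : forall g, exists c, (c \in S) && (f g == e * c).
    move=> g; have [gf|gN] := boolP (g \in finsupp f).
      have [c [cS _ ->]] := he (f g) (ex_intro2 _ _ g gf erefl).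
      by exists c; rewrite cS eqxx.
    by exists 0; rewrite hS0 mulr0 notsupp ?eqxx.
  pose F g := xchoose (Hall g).
  have FP g : (F g \in S) && (f g == e * F g) := xchooseP (Hall g).
  pose f' := mkfs (finsupp f) F.
  have f'S : inSG S f'.
    by move=> g; rewrite mkfsE; case: ifP => _ //; case/andP: (FP g).
  have monoS : inSG S (mono e (0:G)).
    by move=> g; rewrite monoE; case: ifP => _.
  have hf : gprod_eq f (mono e 0) f'.
    move=> g; rewrite (gmul_monoL (f') (monoE e 0)) subr0 mkfsE; case: ifP => gf.
      by case/andP: (FP g) => _ /eqP.
    by rewrite notsupp ?gf // mulr0.
  case: (irr _ _ monoS f'S hf) => [[_ [q [qS hq]]]|u].
    have := hq 0; rewrite (gmul_monoL (q) (monoE e 0)) /gone eqxx subrr => h.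
    exists (q 0); split => //.
    by apply/eqP => q0; move: h; rewrite q0 mulr0 => /eqP; rewrite eq_sym oner_eq0.
  have [t [b [tS hq]]] := UM _ _ _ u.
  exfalso; apply: (notmono b) => x xP.
  apply: (mono_supp hq); rewrite mem_finsupp; apply/negP => /eqP h0.
  move: (insupp xP); rewrite hf (gmul_monoL (f') (monoE e 0)) subr0 h0 mulr0.
  by rewrite eqxx.
move=> [[_ mon] [_ _ _ hg]].
have key : forall (r u : gpoly G R) s g, s \in S -> inSG S u ->
    (forall h, r h = if h == g then s else 0) ->
    (forall h, f h = s * u (h - g)) -> unitSG S r.
  move=> r u s g sS uS hr hfu.
  have s0 : s != 0.
    apply/eqP => s0; case: nzf => x; by rewrite hfu s0 mul0r eqxx.
  have [c [cS c0 e1]] : Defs.sdvd S s 1.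
    apply: hg => // b [h hP ->]; exists (u (h - g)); split => //.
      by apply/eqP => u0; move: (insupp hP); rewrite hfu u0 mulr0 eqxx.
  split; first by move=> h; rewrite hr; case: ifP => _.
  exists (mono c (- g)); split; first by move=> h; rewrite monoE; case: ifP => _.
  move=> h; rewrite (gmul_monoL (mono c (-g)) hr) monoE /gone subr_eq addNr.
  by case: ifP => _; rewrite ?e1 ?mulr0.
split => //; split.
  by move=> /UM [s [g [_ hp]]]; apply: (notmono g); apply: mono_supp hp.
move=> p q pS qS hf.
case: (mon p q pS qS hf) => [[s [g [sS hp]]]|[t [b [tS hq]]]].
  left; apply: (key p q s g sS qS hp) => h.
  by rewrite hf (gmul_monoL (q) hp).
right; apply: (key q p t b tS pS hq) => h.
by rewrite hf (gmul_monoR p hq) mulrC.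
Qed.
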